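(* Let $S>0$, let $I\ge 1$, let $N_1,\dots,N_I$ be positive integers and let $\theta_1>\theta_2>\dots>\theta_I>0$. Consider the single pricing problem $$\max_{p>0,\ \{n_i\}}\ p\sum_{i=1}^I n_i s_i\quad\text{s.t.}\quad s_i=\Big(\frac{\theta_i}{p}-1\Big)^+,\ \ n_i\in\{0,1,\dots,N_i\}\ (i=1,\dots,I),\quad \sum_{i=1}^I n_i s_i\le S,$$ where $(x)^+=\max(x,0)$. For $k\in\{1,\dots,I\}$ let $p(k)=\frac{\sum_{i=1}^k N_i\theta_i}{S+\sum_{i=1}^k N_i}$, let $K^{sp}=\max\{k\in\{1,\dots,I\}:\theta_k>p(k)\}$ (this set contains $k=1$), and let $p^*=p(K^{sp})$. Then this problem has an optimal solution in which $n_i=N_i$ for all $i$, the price is $p^*$, and the resulting allocations are $s_i=\theta_i/p^*-1$ for $i=1,\dots,K^{sp}$ and $s_i=0$ for $i=K^{sp}+1,\dots,I$.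
   Context: Each user of group $i$ has utility $\theta_i\ln(1+s)$ for $s$ units of resource and, facing unit price $p$, demands $(\theta_i/p-1)^+$. The service provider has total resource $S$, charges one common unit price $p$ to all users, and chooses the number $n_i$ of admitted users of each group. *)

(* Defs.v *)
From mathcomp Require Import all_boot all_order all_algebra.
Set Implicit Arguments. Unset Strict Implicit. Unset Printing Implicit Defensive.
Import Order.TTheory GRing.Theory Num.Theory.
Local Open Scope ring_scope.

(* Groups are indexed by 'I_I (group i+1 of the paper is ordinal i). *)

Definition pos_part {R : realFieldType} (x : R) : R := Num.max x 0.

Definition alloc {R : realFieldType} {I : nat} (theta : 'I_I -> R) (p : R) (i : 'I_I) : R :=
  pos_part (theta i / p - 1).

Definition total_alloc {R : realFieldType} {I : nat} (theta : 'I_I -> R)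
  (p : R) (n : 'I_I -> nat) : R :=
  \sum_(i < I) (n i)%:R * alloc theta p i.

Definition revenue {R : realFieldType} {I : nat} (theta : 'I_I -> R)
  (p : R) (n : 'I_I -> nat) : R := p * total_alloc theta p n.

Definition feasible {R : realFieldType} {I : nat} (S : R) (N : 'I_I -> nat)
  (theta : 'I_I -> R) (p : R) (n : 'I_I -> nat) : Prop :=
  0 < p /\ (forall i, (n i <= N i)%N) /\ total_alloc theta p n <= S.

(* p(k) = (sum_{i=1}^k N_i theta_i) / (S + sum_{i=1}^k N_i), k in 1..I
   (paper index i corresponds to ordinal i-1, so "i <= k" becomes "i < k") *)
Definition pk {R : realFieldType} {I : nat} (S : R) (N : 'I_I -> nat)
  (theta : 'I_I -> R) (k : nat) : R :=
  (\sum_(i < I | (i < k)%N) (N i)%:R * theta i) / (S + \sum_(i < I | (i < k)%N) (N i)%:R).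

(* K^sp = max {k in 1..I : theta_k > p(k)}; writing k = j+1 with j : 'I_I,
   theta_k is theta j. *)
Definition Ksp {R : realFieldType} {I : nat} (S : R) (N : 'I_I -> nat)
  (theta : 'I_I -> R) : nat :=
  (\max_(j < I | pk S N theta j.+1 < theta j) j).+1.

(* Main.v *)
Require Import Defs.
From mathcomp Require Import all_boot all_order all_algebra.
From mathcomp Require Import ring lra.
Import Order.TTheory GRing.Theory Num.Theory.
Local Open Scope ring_scope.

Lemma sum_split_last (R : realFieldType) (I : nat) (F : 'I_I -> R) (j : 'I_I) :
  \sum_(i < I | (i < j.+1)%N) F i = \sum_(i < I | (i < j)%N) F i + F j.
Proof.
rewrite (bigD1 j) //= addrC; congr (_ + _); apply: eq_bigl => i /=.
case: (eqVneq i j) => [->|hne]; first by rewrite ltnn andbF.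
rewrite andbT ltnS leq_eqVlt.
by have /negbTE -> : (val i != val j) by apply: contra_neq hne => e; apply: val_inj.
Qed.

Lemma pos_mul (R : realFieldType) (p x : R) : 0 < p ->
  p * pos_part (x / p - 1) = pos_part (x - p).
Proof.
move=> hp; rewrite /pos_part.
case: (lerP x p) => h.
  rewrite max_r; last by rewrite subr_le0 ler_pdivrMr // mul1r.
  by rewrite max_r ?mulr0 // subr_le0.
rewrite max_l; last by rewrite subr_ge0 ler_pdivlMr // mul1r ltW.
rewrite max_l; last by rewrite subr_ge0 ltW.
by rewrite mulrBr mulr1 mulrC -mulrA mulVf ?mulr1 // gt_eqF.
Qed.

Lemma pos_ge0 (R : realFieldType) (x : R) : 0 <= pos_part x.
Proof. by rewrite /pos_part le_max lexx orbT. Qed.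

Lemma pos_mono (R : realFieldType) (x y : R) : x <= y -> pos_part x <= pos_part y.
Proof.
move=> h; rewrite /pos_part ge_max !le_max lexx orbT andbT h //.
Qed.

Lemma rev_eq (R : realFieldType) (I : nat) (theta : 'I_I -> R) p n : 0 < p ->
  revenue theta p n = \sum_(i < I) (n i)%:R * pos_part (theta i - p).
Proof.
move=> hp; rewrite /revenue /total_alloc mulr_sumr; apply: eq_bigr => i _.
by rewrite mulrCA /alloc pos_mul.
Qed.

Theorem theorem2 (R : realFieldType) (I : nat) (S : R) (N : 'I_I -> nat)
  (theta : 'I_I -> R)
  (hI : (1 <= I)%N) (hS : 0 < S) (hN : forall i, (0 < N i)%N)
  (htheta_dec : forall i j : 'I_I, (i < j)%N -> theta j < theta i)
  (htheta_pos : forall i, 0 < theta i) :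
  let K := Ksp S N theta in
  let pstar := pk S N theta K in
  [/\ feasible S N theta pstar N,
      (forall (p : R) (n : 'I_I -> nat), feasible S N theta p n ->
         revenue theta p n <= revenue theta pstar N)
    & (forall i : 'I_I, alloc theta pstar i =
         if (i < K)%N then theta i / pstar - 1 else 0)].
Proof.
move=> K pstar; subst pstar K.
pose P := fun j : 'I_I => pk S N theta j.+1 < theta j.
pose j0 : 'I_I := Ordinal hI.
have Ngt0 : forall i, 0 < (N i)%:R :> R by move=> i; rewrite ltr0n hN.
have P0 : P j0.
  have hp1 : (fun i : 'I_I => (i < j0.+1)%N) =1 pred1 j0.
    move=> i /=; rewrite ltnS leqn0; apply/eqP/eqP => [h|->] //; exact: val_inj.
  rewrite /P /pk !(big_pred1 _ hp1).
  have := htheta_pos j0; have := Ngt0 j0 => h1 h2.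
  rewrite ltr_pdivrMr; last by lra.
  nra.
case: (@arg_maxnP _ j0 P (fun j => val j) P0) => jm Pjm maxj.
have HK : Ksp S N theta = jm.+1.
  rewrite /Ksp; congr (_.+1); apply/eqP; rewrite eqn_leq (leq_bigmax_cond jm Pjm) andbT.
  by apply/bigmax_leqP => i Pi; exact: maxj.
rewrite HK.
set p := pk S N theta jm.+1.
pose A := \sum_(i < I | (i < jm.+1)%N) (N i)%:R * theta i.
pose B : R := \sum_(i < I | (i < jm.+1)%N) (N i)%:R.
have Hp : p = A / (S + B) by [].
have B0 : 0 <= B by apply: sumr_ge0 => i _; exact: ltW.
have A0 : 0 < A.
  rewrite /A sum_split_last.
  have : 0 <= \sum_(i < I | (i < jm)%N) (N i)%:R * theta i.
    by apply: sumr_ge0 => i _; apply: mulr_ge0; apply: ltW.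
  have := mulr_gt0 (Ngt0 jm) (htheta_pos jm); lra.
have pgt0 : 0 < p by rewrite Hp divr_gt0 //; lra.
have hlt : forall i : 'I_I, (i < jm.+1)%N -> p < theta i.
  move=> i; rewrite ltnS leq_eqVlt => /orP [/eqP e|h].
    by have -> : i = jm by apply: val_inj.
  by apply: lt_trans Pjm (htheta_dec _ _ h).
have hge : forall i : 'I_I, ~~ (i < jm.+1)%N -> theta i <= p.
  move=> i; rewrite -leqNgt => hi.
  have hjn : (jm.+1 < I)%N by apply: leq_ltn_trans hi (ltn_ord i).
  pose jn : 'I_I := Ordinal hjn.
  have nP : ~~ P jn.
    apply/negP => Pjn; have := maxj jn Pjn; rewrite /= ltnn //.
  have h1 : theta jn <= p.
    move: nP; rewrite /P -leNgt /pk (@sum_split_last R I (fun i => (N i)%:R * theta i) jn)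
      (@sum_split_last R I (fun i => (N i)%:R) jn) /= -/A -/B => h.
    have := Ngt0 jn => hn.
    rewrite Hp ler_pdivlMr; last by lra.
    move: h; rewrite ler_pdivlMr; last by lra.
    nra.
  rewrite leq_eqVlt in hi; case/orP: hi => [/eqP e|h].
    by have -> : i = jn by apply: val_inj; rewrite /= e.
  by apply: le_trans h1; apply: ltW; apply: htheta_dec.
have halloc : forall i : 'I_I, alloc theta p i =
         if (i < jm.+1)%N then theta i / p - 1 else 0.
  move=> i; rewrite /alloc /pos_part; case: ifPn => h.
    rewrite max_l // subr_ge0 ler_pdivlMr // mul1r; exact: ltW (hlt i h).
  by rewrite max_r // subr_le0 ler_pdivrMr // mul1r; exact: hge.
have htot : total_alloc theta p N = S.
  rewrite /total_alloc (eq_bigr (fun i : 'I_I => if (i < jm.+1)%N then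
             (N i)%:R * (theta i / p - 1) else 0)); last first.
    by move=> i _; rewrite halloc; case: ifP => _ //; rewrite mulr0.
  rewrite -big_mkcond /=.
  under eq_bigr do rewrite mulrBr mulr1 mulrA.
  rewrite sumrB -mulr_suml -/A -/B Hp.
  field; apply/andP; split; apply/negP => /eqP; lra.
split.
- by split => //; split => [i|]; rewrite ?htot.
- move=> q n [hq [hn hqt]].
  case: (lerP p q) => hpq.
    rewrite !rev_eq //; apply: ler_sum => i _.
    apply: ler_pM; [by rewrite ler0n | exact: pos_ge0 | by rewrite ler_nat | ].
    apply: pos_mono; lra.
  rewrite /revenue htot.
  have : 0 <= total_alloc theta q n.
    apply: sumr_ge0 => i _; apply: mulr_ge0; [by rewrite ler0n | exact: pos_ge0].
  nra.
- exact: halloc.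
Qed.
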